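(* Let $\mathcal{F}$ be a set of reductions. The following are equivalent: (i) for every family $\{f_k:k\in\omega\}\subseteq\mathcal{F}$, the function $\overline{\bigoplus}_k f_k$ belongs to $\mathcal{F}$; (ii) for every family $\{f_k:k\in\omega\}\subseteq\mathcal{F}$, the function $\bigcup_k(f_k\restriction\mathbf{N}_{\langle k\rangle})$ belongs to $\mathcal{F}$, and $\mathsf{Lip}\subseteq\mathcal{F}$.
   Context: $\mathbb{R}={}^\omega\omega$ with metric $d(x,y)=2^{-n}$, $n$ least with $x(n)\neq y(n)$ ($d(x,x)=0$); $\mathbf{N}_s=\{x:s\subseteq x\}$. For $C>0$, $\mathsf{Lip}(C)$ is the set of $f:\mathbb{R}\to\mathbb{R}$ with $d(f(x),f(y))\le C\,d(x,y)$; $\mathsf{Lip}=\bigcup_{k\in\mathbb{Z}}\mathsf{Lip}(2^k)$ and $\mathsf{L}=\mathsf{Lip}(1)$. A set of reductions is a set $\mathcal{F}$ of functions $\mathbb{R}\to\mathbb{R}$ closed under composition, with $\mathsf{L}\subseteq\mathcal{F}$, admitting a surjection $\mathbb{R}\twoheadrightarrow\mathcal{F}$. For $x\in\mathbb{R}$, $x^-=\langle x(n+1):n\in\omega\rangle$, and $\overline{\bigoplus}_k f_k(x)=f_{x(0)}(x^-)$. $\bigcup_k(f_k\restriction\mathbf{N}_{\langle k\rangle})$ is the function agreeing with $f_k$ on $\mathbf{N}_{\langle k\rangle}$ for each $k$. *)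

(* Defs.v *)
From Stdlib Require Import Reals ZArith ClassicalEpsilon.
Open Scope R_scope.

Definition Baire := nat -> nat.

(* the least n with x(n) <> y(n) (meaningful when x <> y) *)
Definition first_diff (x y : Baire) : nat :=
  epsilon (inhabits 0%nat)
    (fun n => x n <> y n /\ forall m, (m < n)%nat -> x m = y m).

Definition dist (x y : Baire) : R :=
  match excluded_middle_informative (x = y) with
  | left _ => 0
  | right _ => / (2 ^ first_diff x y)
  end.

Definition Lipschitz (C : R) (f : Baire -> Baire) : Prop :=
  forall x y, dist (f x) (f y) <= C * dist x y.

Definition Lip (f : Baire -> Baire) : Prop :=
  exists k : Z, Lipschitz (powerRZ 2 k) f.

Definition Lip1 (f : Baire -> Baire) : Prop := Lipschitz 1 f.

Definition set_of_reductions (F : (Baire -> Baire) -> Prop) : Prop :=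
  (forall f g, F f -> F g -> F (fun x => f (g x))) /\
  (forall f, Lip1 f -> F f) /\
  (exists s : Baire -> (Baire -> Baire),
      (forall x, F (s x)) /\ (forall f, F f -> exists x, s x = f)).

Definition shift (x : Baire) : Baire := fun n => x (S n).

Definition bar_oplus (fs : nat -> Baire -> Baire) : Baire -> Baire :=
  fun x => fs (x 0%nat) (shift x).

(* U_k (f_k restricted to N_<k>): agrees with f_k on N_<k> *)
Definition glue_restr (fs : nat -> Baire -> Baire) : Baire -> Baire :=
  fun x => fs (x 0%nat) x.

(* Main.v *)
Require Import Defs.
From Stdlib Require Import Reals ZArith ClassicalEpsilon.
From Stdlib Require Import Lra Lia Classical FunctionalExtensionality.
Open Scope R_scope.

Definition spec (x y : Baire) n :=
  x n <> y n /\ forall m, (m < n)%nat -> x m = y m.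

Lemma spec_unique x y n m : spec x y n -> spec x y m -> n = m.
Proof.
  intros [H1 H2] [H3 H4].
  destruct (Nat.lt_trichotomy n m) as [h|[h|h]]; auto.
  - exfalso; apply H1, H4, h.
  - exfalso; apply H3, H2, h.
Qed.

Lemma spec_exists x y : x <> y -> exists n, spec x y n.
Proof.
  intros Hxy.
  assert (Hex : exists n, x n <> y n).
  { apply NNPP; intro H; apply Hxy; apply functional_extensionality;
    intro n; apply NNPP; intro H'; apply H; eauto. }
  destruct Hex as [n Hn].
  revert Hn. pattern n. apply (well_founded_ind lt_wf). clear n.
  intros n IH Hn.
  destruct (classic (forall m, (m < n)%nat -> x m = y m)) as [H|H].
  - exists n; split; auto.
  - apply not_all_ex_not in H; destruct H as [m Hm].
    apply imply_to_and in Hm; destruct Hm as [Hm1 Hm2].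
    apply (IH m Hm1 Hm2).
Qed.

Lemma fd_spec x y : x <> y -> spec x y (first_diff x y).
Proof.
  intro H. unfold first_diff.
  apply (epsilon_spec (inhabits 0%nat) (fun n => spec x y n)).
  apply spec_exists; auto.
Qed.

Lemma dist_ge0 x y : 0 <= Defs.dist x y.
Proof.
  unfold Defs.dist; destruct excluded_middle_informative; [lra|].
  apply Rlt_le, Rinv_0_lt_compat, pow_lt; lra.
Qed.

Lemma dist_le1 x y : Defs.dist x y <= 1.
Proof.
  unfold Defs.dist; destruct excluded_middle_informative; [lra|].
  rewrite <- Rinv_1. apply Rinv_le_contravar; [lra|].
  apply pow_R1_Rle; lra.
Qed.

Lemma dist_diff_head x y : x 0%nat <> y 0%nat -> Defs.dist x y = 1.
Proof.
  intro H. unfold Defs.dist; destruct excluded_middle_informative as [e|n].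
  - subst; congruence.
  - assert (first_diff x y = 0%nat) as ->.
    { apply (spec_unique x y); [apply fd_spec; auto|].
      split; auto; intros; lia. }
    simpl; lra.
Qed.

Lemma dist_eq x y : x = y -> Defs.dist x y = 0.
Proof. intro H; unfold Defs.dist; destruct excluded_middle_informative; tauto. Qed.

Lemma dist_neq x y : x <> y -> Defs.dist x y = / 2 ^ first_diff x y.
Proof. intro H; unfold Defs.dist; destruct excluded_middle_informative; tauto. Qed.

Lemma dist_same_head x y : x 0%nat = y 0%nat ->
  Defs.dist x y = / 2 * Defs.dist (Defs.shift x) (Defs.shift y).
Proof.
  intro H.
  destruct (classic (x = y)) as [e|n].
  - rewrite !dist_eq; [lra| subst; auto | auto].
  - assert (n' : Defs.shift x <> Defs.shift y).
    { intro e'; apply n; apply functional_extensionality; intros [|k]; auto.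
      change (Defs.shift x k = Defs.shift y k); rewrite e'; auto. }
    rewrite !dist_neq by auto.
    assert (first_diff x y = S (first_diff (Defs.shift x) (Defs.shift y))) as ->.
    { apply (spec_unique x y); [apply fd_spec; auto|].
      destruct (fd_spec _ _ n') as [A B]. split; auto.
      intros [|m] Hm; auto. apply (B m). lia. }
    simpl. rewrite Rinv_mult. reflexivity.
Qed.

Definition bcons (k : nat) (y : Baire) : Baire :=
  fun n => match n with O => k | S m => y m end.

Lemma cons_shift x : bcons (x 0%nat) (Defs.shift x) = x.
Proof. apply functional_extensionality; intros [|n]; reflexivity. Qed.

Lemma dist_cons k y y' : Defs.dist (bcons k y) (bcons k y') = / 2 * Defs.dist y y'.
Proof. apply dist_same_head; reflexivity. Qed.

Lemma lip_all (F : (Baire -> Baire) -> Prop) :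
  set_of_reductions F ->
  (forall fs : nat -> Baire -> Baire, (forall k, F (fs k)) -> F (bar_oplus fs)) ->
  forall n f, Lipschitz (2 ^ n) f -> F f.
Proof.
  intros [Hc [HL Hs]] Hi n. induction n as [|n IH]; intros f Hf.
  - apply HL. exact Hf.
  - set (fs := fun k y => f (bcons k y)).
    assert (E : bar_oplus fs = f).
    { apply functional_extensionality; intro x. unfold bar_oplus, fs.
      rewrite cons_shift; reflexivity. }
    rewrite <- E. apply Hi. intro k. apply IH. intros y y'.
    unfold fs. specialize (Hf (bcons k y) (bcons k y')).
    rewrite dist_cons in Hf. simpl in Hf.
    replace (2 * 2 ^ n * (/ 2 * Defs.dist y y')) with (2 ^ n * Defs.dist y y') in Hf
      by (field). exact Hf.
Qed.

Theorem proposition4p1 (F : (Baire -> Baire) -> Prop) :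
  set_of_reductions F ->
  ((forall fs : nat -> Baire -> Baire,
       (forall k, F (fs k)) -> F (bar_oplus fs))
   <->
   ((forall fs : nat -> Baire -> Baire,
       (forall k, F (fs k)) -> F (glue_restr fs))
    /\ (forall f, Lip f -> F f))).
Proof.
  intros HF. pose proof HF as [Hc [HL Hs]]. split.
  - intros Hi. split.
    + intros fs Hfs.
      set (gs := fun k y => fs k (bcons k y)).
      assert (E : bar_oplus gs = glue_restr fs).
      { apply functional_extensionality; intro x. unfold bar_oplus, gs, glue_restr.
        rewrite cons_shift; reflexivity. }
      rewrite <- E. apply Hi. intro k. unfold gs.
      apply (Hc (fs k) (bcons k)); auto.
      apply HL. intros y y'. rewrite dist_cons. pose proof (dist_ge0 y y'). lra.
    + intros f [k Hk]. destruct k as [|p|p].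
      * apply HL. exact Hk.
      * apply (lip_all F HF Hi (Pos.to_nat p)). exact Hk.
      * apply HL. intros x y. specialize (Hk x y). simpl in Hk.
        pose proof (dist_ge0 x y).
        assert (/ 2 ^ Pos.to_nat p <= 1).
        { rewrite <- Rinv_1. apply Rinv_le_contravar; [lra|].
          apply pow_R1_Rle; lra. }
        assert (/ 2 ^ Pos.to_nat p * Defs.dist x y <= 1 * Defs.dist x y)
          by (apply Rmult_le_compat_r; auto).
        lra.
  - intros [Hg Hl] fs Hfs.
    assert (Hsh : F Defs.shift).
    { apply Hl. exists 1%Z. intros x y. simpl.
      destruct (Nat.eq_dec (x 0%nat) (y 0%nat)) as [e|e].
      - rewrite (dist_same_head x y e). lra.
      - rewrite (dist_diff_head x y e). pose proof (dist_le1 (Defs.shift x) (Defs.shift y)). lra. }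
    change (F (glue_restr (fun k x => fs k (Defs.shift x)))).
    apply Hg. intro k. apply (Hc (fs k) Defs.shift); auto.
Qed.
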